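(* Let $(\alpha_n,\beta_n)_{n\ge1}$ be integers with $12\sum_{k<n}\beta_k<\alpha_n\le\beta_n$ for every $n$ and $\sum_i\frac{\log\beta_i}{3^i}<\infty$. Then for all sufficiently small $\varepsilon>0$, a $B_\varepsilon$-random subset of $\mathbb{Z}^2$ is bi-sparse (with respect to $(\alpha_n,\beta_n)$) with probability $1$.
   Context: Distances on $\mathbb{Z}^2$ are $\ell_\infty$; diameters and $\beta$-neighborhoods are taken with respect to this distance. For $E\subset\mathbb{Z}^2$ and integers $\beta\ge\alpha>0$, a nonempty $X\subset E$ is an $(\alpha,\beta)$-bi-island in $E$ if $X=X_0\cup X_1$ for some sets $X_0,X_1$ such that: the $\beta$-neighborhood of $X$ contains no point of $E\setminus X$; $X_0$ and $X_1$ have diameter at most $\alpha$; and the distance between $X_0$ and $X_1$ is at most $\beta$ (one of them may be empty). Given $(\alpha_i,\beta_i)$, the cleaning process sets $E_0=E$ and obtains $E_i$ from $E_{i-1}$ by removing all $(\alpha_i,\beta_i)$-bi-islands of $E_{i-1}$ (rank $i$ bi-islands); a point is affected at step $i$ if it lies in the $\beta_i$-neighborhood of some rank $i$ bi-island. $E$ is bi-sparse if every point of $E$ is removed at some step and every point of $\mathbb{Z}^2$ is affected at only finitely many steps. $B_\varepsilon$ is the Bernoulli distribution on subsets of $\mathbb{Z}^2$: each point belongs to the set independently with probability $\varepsilon$. *)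

(* Defs.v *)
(* subsets of Z^2 as predicates, Bernoulli product measure
   null sets via Caratheodory outer measure on cylinder sets. *)
From Stdlib Require Import Reals ZArith List.
Open Scope R_scope.

Definition pt := (Z * Z)%type.
Definition subset := pt -> Prop.

Definition dist (p q : pt) : Z :=
  Z.max (Z.abs (fst p - fst q)) (Z.abs (snd p - snd q)).

Definition diam_le (X : subset) (a : Z) : Prop :=
  forall x y, X x -> X y -> (dist x y <= a)%Z.

(* distance between X0 and X1 at most b; vacuous if one of them is empty *)
Definition setdist_le (X0 X1 : subset) (b : Z) : Prop :=
  (exists x, X0 x) -> (exists y, X1 y) ->
  exists x y, X0 x /\ X1 y /\ (dist x y <= b)%Z.

Definition bi_island (a b : Z) (E X : subset) : Prop :=
  (exists x, X x) /\
  (forall x, X x -> E x) /\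
  (forall x y, X x -> E y -> ~ X y -> (b < dist x y)%Z) /\
  exists X0 X1 : subset,
    (forall x, X x <-> X0 x \/ X1 x) /\
    diam_le X0 a /\ diam_le X1 a /\ setdist_le X0 X1 b.

(* cleaning process: clean alpha beta E i = E_i (steps indexed from 1) *)
Fixpoint clean (alpha beta : nat -> Z) (E : subset) (i : nat) : subset :=
  match i with
  | O => E
  | S j => fun p => clean alpha beta E j p /\
       ~ (exists X, bi_island (alpha (S j)) (beta (S j)) (clean alpha beta E j) X /\ X p)
  end.

Definition affected (alpha beta : nat -> Z) (E : subset) (i : nat) (p : pt) : Prop :=
  exists X, bi_island (alpha i) (beta i) (clean alpha beta E (i - 1)) X /\
            exists x, X x /\ (dist p x <= beta i)%Z.

Definition bi_sparse (alpha beta : nat -> Z) (E : subset) : Prop :=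
  (forall p, E p -> exists i, (1 <= i)%nat /\
       clean alpha beta E (i - 1) p /\ ~ clean alpha beta E i p) /\
  (forall p, exists N, forall i, (N < i)%nat -> ~ affected alpha beta E i p).

(* cylinder sets: finite lists of (point, membership) with distinct points *)
Definition cylinder := list (pt * bool).

Definition cyl_wf (c : cylinder) : Prop := NoDup (map fst c).

Definition in_cyl (c : cylinder) (E : subset) : Prop :=
  forall p b, In (p, b) c -> (E p <-> b = true).

Fixpoint cyl_prob (eps : R) (c : cylinder) : R :=
  match c with
  | nil => 1
  | (_, b) :: c' => (if b then eps else 1 - eps) * cyl_prob eps c'
  end.

(* S is B_eps-null: outer measure (countable covers by cylinders) is 0 *)
Definition B_null (eps : R) (S : subset -> Prop) : Prop :=
  forall delta, 0 < delta ->
    exists C : nat -> cylinder,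
      (forall n, cyl_wf (C n)) /\
      (forall E, S E -> exists n, in_cyl (C n) E) /\
      (forall N, sum_f_R0 (fun n => cyl_prob eps (C n)) N <= delta).

(* sum_{1 <= k < n} beta k *)
Fixpoint sum_before (beta : nat -> Z) (n : nat) : Z :=
  match n with
  | O => 0%Z
  | S m => match m with O => 0%Z | _ => (sum_before beta m + beta m)%Z end
  end.

(* Main.v *)
Require Import Defs.
From Stdlib Require Import Reals ZArith List Lia Lra Classical.
Import Defs.
Open Scope R_scope.
Open Scope Z_scope.

Lemma dist_tri x y z : dist x z <= dist x y + dist y z.
Proof. destruct x, y, z; unfold dist; simpl; lia. Qed.
Lemma dist_sym x y : dist x y = dist y x.
Proof. destruct x, y; unfold dist; simpl; lia. Qed.
Lemma dist_nonneg x y : 0 <= dist x y.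
Proof. destruct x, y; unfold dist; simpl; lia. Qed.
Lemma dist_refl x : dist x x = 0.
Proof. destruct x; unfold dist; simpl; lia. Qed.

Lemma far_triple (a b S : Z) (E : subset) (x : pt) :
  0 <= S -> 2 * S <= a ->
  E x -> ~ (exists X, bi_island a b E X /\ X x) ->
  exists y z, E y /\ E z /\ dist x y <= S + b /\ dist x z <= 2*S + 2*b /\
    S < dist x y /\ S < dist y z /\ S < dist x z.
Proof.
  intros HS Ha Ex Hn.
  set (A := fun p => E p /\ dist x p <= S).
  destruct (classic (exists y, E y /\ S < dist x y /\ exists w, A w /\ dist w y <= b))
    as [[y [Ey [Sy [w [[Ew Aw] Hwy]]]]] | Hno].
  - set (B := fun p => E p /\ dist y p <= S).
    destruct (classic (exists z, E z /\ ~ (A z \/ B z) /\ exists u, (A u \/ B u) /\ dist u z <= b))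
      as [[z [Ez [Hz [u [Hu Huz]]]]] | Hno2].
    + exists y, z. unfold A, B in *.
      assert (dist x y <= S + b) by (pose proof (dist_tri x w y); lia).
      split; [|split; [|split; [|split; [|split; [|split]]]]]; auto.
      * destruct Hu as [[_ Hu]|[_ Hu]].
        -- pose proof (dist_tri x u z); lia.
        -- pose proof (dist_tri x u z); pose proof (dist_tri x y u); lia.
      * destruct (Z_lt_le_dec S (dist y z)); auto. exfalso; apply Hz; right; split; auto.
      * destruct (Z_lt_le_dec S (dist x z)); auto. exfalso; apply Hz; left; split; auto.
    + exfalso. apply Hn. exists (fun p => A p \/ B p). split.
      * split; [exists x; left; split; auto; rewrite dist_refl; lia|].
        split; [intros p [[? _]|[? _]]; auto|].
        split.
        { intros p q Hp Eq Hq. destruct (Z_lt_le_dec b (dist p q)); auto.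
          exfalso; apply Hno2; exists q; split; auto; split; auto; exists p; split; auto. }
        exists A, B. split; [tauto|]. split; [|split].
        -- intros p q [_ Hp] [_ Hq]. pose proof (dist_tri p x q). rewrite (dist_sym p x) in H. lia.
        -- intros p q [_ Hp] [_ Hq]. pose proof (dist_tri p y q). rewrite (dist_sym p y) in H. lia.
        -- intros _ _. exists w, y. split; [split; auto|]. split; auto. split; auto. rewrite dist_refl; lia.
      * left. split; auto. rewrite dist_refl; lia.
  - exfalso. apply Hn. exists A. split.
    + split; [exists x; split; auto; rewrite dist_refl; lia|].
      split; [intros p [? _]; auto|].
      split.
      { intros p q Hp Eq Hq. destruct (Z_lt_le_dec b (dist p q)); auto.
        exfalso; apply Hno; exists q; split; auto. split.
        - destruct (Z_lt_le_dec S (dist x q)); auto. exfalso; apply Hq; split; auto.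
        - exists p; split; auto. }
      exists A, (fun _ => False). split; [tauto|]. split; [|split].
      * intros p q [_ Hp] [_ Hq]. pose proof (dist_tri p x q). rewrite (dist_sym p x) in H. lia.
      * intros p q [].
      * intros _ [? []].
    + split; auto. rewrite dist_refl; lia.
Qed.

Lemma clean_mono al be E n p : clean al be E (S n) p -> clean al be E n p.
Proof. simpl; tauto. Qed.
Lemma clean_sub al be E n p : clean al be E n p -> E p.
Proof. induction n; simpl; auto. intros [H _]; auto. Qed.

Definition boxlen (r : Z) : nat := Z.to_nat (2 * r + 1).
Definition box (c : pt) (r : Z) : list pt :=
  flat_map (fun i => map (fun j => (fst c - r + Z.of_nat i, snd c - r + Z.of_nat j)%Z)
                         (seq 0 (boxlen r))) (seq 0 (boxlen r)).

Lemma box_len c r : length (box c r) = (boxlen r * boxlen r)%nat.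
Proof.
  unfold box. rewrite (flat_map_constant_length (c := boxlen r)).
  - rewrite length_seq; auto.
  - intros; rewrite length_map, length_seq; auto.
Qed.

Lemma box_in c p r : 0 <= r -> dist c p <= r -> In p (box c r).
Proof.
  intros Hr Hd. destruct c as [c1 c2], p as [p1 p2]. unfold dist in Hd; simpl in Hd.
  unfold box. apply in_flat_map. exists (Z.to_nat (p1 - c1 + r)). split.
  - apply in_seq. unfold boxlen. lia.
  - apply in_map_iff. exists (Z.to_nat (p2 - c2 + r)). split.
    + simpl. f_equal; lia.
    + apply in_seq. unfold boxlen. lia.
Qed.

Lemma box_in_inv c p r : In p (box c r) -> dist c p <= r.
Proof.
  destruct c as [c1 c2]. unfold box. intros H. apply in_flat_map in H as [i [Hi H]].
  apply in_map_iff in H as [j [<- Hj]]. apply in_seq in Hi, Hj. unfold boxlen in *.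
  unfold dist; simpl. lia.
Qed.

Fixpoint Rr (be : nat -> Z) (n : nat) : Z :=
  match n with O => 0 | S m => 5 * Rr be m + 2 * be (S m) end.

Definition far (be : nat -> Z) (n : nat) (a b : pt) : bool := Z.ltb (2 * Rr be n) (dist a b).

Definition prod3 (A B C : list (list pt)) : list (list pt) :=
  flat_map (fun a => flat_map (fun b => map (fun c => a ++ b ++ c) C) B) A.

Fixpoint F (be : nat -> Z) (n : nat) (x : pt) : list (list pt) :=
  match n with
  | O => (x :: nil) :: nil
  | S m => flat_map (fun y => flat_map (fun z =>
        if andb (andb (far be m x y) (far be m y z)) (far be m x z)
        then prod3 (F be m x) (F be m y) (F be m z) else nil)
        (box x (2 * (2 * Rr be m) + 2 * be (S m))))
      (box x (2 * Rr be m + be (S m)))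
  end.

Fixpoint G (be : nat -> Z) (n : nat) : nat :=
  match n with O => 1%nat | S m =>
    (boxlen (2 * Rr be m + be (S m)) * boxlen (2 * Rr be m + be (S m)) *
     (boxlen (2 * (2 * Rr be m) + 2 * be (S m)) * boxlen (2 * (2 * Rr be m) + 2 * be (S m))) *
     (G be m * G be m * G be m))%nat end.

Lemma in_prod3 A B C l : In l (prod3 A B C) ->
  exists a b c, In a A /\ In b B /\ In c C /\ l = a ++ b ++ c.
Proof.
  unfold prod3. intros H. apply in_flat_map in H as [a [Ha H]].
  apply in_flat_map in H as [b [Hb H]]. apply in_map_iff in H as [c [Hc H]].
  exists a, b, c; auto.
Qed.

Lemma len_flat_map_le {A B} (f : A -> list B) l k :
  (forall a, In a l -> (length (f a) <= k)%nat) -> (length (flat_map f l) <= length l * k)%nat.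
Proof.
  induction l; simpl; intros H; auto. rewrite length_app.
  pose proof (H a (or_introl eq_refl)). pose proof (IHl (fun b Hb => H b (or_intror Hb))). lia.
Qed.

Lemma len_prod3 A B C a b c : (length A <= a)%nat -> (length B <= b)%nat -> (length C <= c)%nat ->
  (length (prod3 A B C) <= a * b * c)%nat.
Proof.
  intros HA HB HC. unfold prod3.
  eapply Nat.le_trans. apply (len_flat_map_le _ _ (b * c)).
  - intros. eapply Nat.le_trans. apply (len_flat_map_le _ _ c).
    + intros. rewrite length_map. auto.
    + apply Nat.mul_le_mono_r; auto.
  - rewrite <- Nat.mul_assoc. apply Nat.mul_le_mono_r; auto.
Qed.

Lemma F_len be n x : (length (F be n x) <= G be n)%nat.
Proof.
  revert x; induction n; intros x; [simpl; auto|cbn [F G]].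
  eapply Nat.le_trans. apply len_flat_map_le with
    (k := (boxlen (2 * (2 * Rr be n) + 2 * be (S n)) * boxlen (2 * (2 * Rr be n) + 2 * be (S n)) *
     (G be n * G be n * G be n))%nat).
  - intros y _. eapply Nat.le_trans. apply len_flat_map_le with (k := (G be n * G be n * G be n)%nat).
    + intros z _. destruct (andb (andb (far be n x y) (far be n y z)) (far be n x z)); simpl; [|lia].
      apply len_prod3; auto.
    + rewrite box_len; apply Nat.eq_le_incl; ring.
  - rewrite box_len; apply Nat.eq_le_incl; ring.
Qed.

Lemma Rr_nonneg be n : (forall k, (1 <= k)%nat -> 0 <= be k) -> 0 <= Rr be n.
Proof. intros H; induction n; cbn [Rr]; try lia. pose proof (H (S n) ltac:(lia)); lia. Qed.

Lemma F_leaves be n x l p : (forall k, (1 <= k)%nat -> 0 <= be k) ->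
  In l (F be n x) -> In p l -> dist x p <= Rr be n.
Proof.
  intros Hbe. revert x l p; induction n; intros x l p.
  - simpl. intros [<-|[]] [<-|[]]. rewrite dist_refl; lia.
  - cbn [F Rr]. intros Hl Hp. apply in_flat_map in Hl as [y [Hy Hl]].
    apply in_flat_map in Hl as [z [Hz Hl]].
    destruct (andb (andb (far be n x y) (far be n y z)) (far be n x z)); [|destruct Hl].
    apply in_prod3 in Hl as [a [b [c [Ha [Hb [Hc ->]]]]]].
    pose proof (Rr_nonneg be n Hbe). pose proof (Hbe (S n) ltac:(lia)).
    apply in_app_or in Hp as [Hp|Hp]; [pose proof (IHn _ _ _ Ha Hp); lia|].
    apply in_app_or in Hp as [Hp|Hp].
    + pose proof (IHn _ _ _ Hb Hp). pose proof (dist_tri x y p).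
      assert (dist x y <= 2 * Rr be n + be (S n)).
      { apply box_in_inv in Hy; auto. }
      lia.
    + pose proof (IHn _ _ _ Hc Hp). pose proof (dist_tri x z p).
      apply box_in_inv in Hz. lia.
Qed.

Lemma far_true be n a b : far be n a b = true -> 2 * Rr be n < dist a b.
Proof. unfold far. apply Z.ltb_lt. Qed.

Lemma F_inv be n x l : In l (F be (S n) x) -> exists y z a b c,
  2 * Rr be n < dist x y /\ 2 * Rr be n < dist y z /\ 2 * Rr be n < dist x z /\
  In a (F be n x) /\ In b (F be n y) /\ In c (F be n z) /\ l = a ++ b ++ c.
Proof.
  cbn [F]. intros Hl. apply in_flat_map in Hl as [y [Hy Hl]].
  apply in_flat_map in Hl as [z [Hz Hl]].
  destruct (far be n x y) eqn:E1; [|destruct Hl].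
  destruct (far be n y z) eqn:E2; [|destruct Hl].
  destruct (far be n x z) eqn:E3; [|destruct Hl]. simpl in Hl.
  apply in_prod3 in Hl as [a [b [c [Ha [Hb [Hc ->]]]]]].
  exists y, z, a, b, c. apply far_true in E1, E2, E3. auto 10.
Qed.

Lemma F_nodup be n x l : (forall k, (1 <= k)%nat -> 0 <= be k) ->
  In l (F be n x) -> NoDup l.
Proof.
  intros Hbe. revert x l; induction n; intros x l.
  - simpl. intros [<-|[]]. constructor; [intros []|constructor].
  - intros Hl. apply F_inv in Hl as [y [z [a [b [c [D1 [D2 [D3 [Ha [Hb [Hc ->]]]]]]]]]]].
    apply NoDup_app; [eauto|apply NoDup_app; eauto|].
    + intros p Hp Hq. pose proof (F_leaves be n _ _ _ Hbe Hb Hp).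
      pose proof (F_leaves be n _ _ _ Hbe Hc Hq). pose proof (dist_tri y p z).
      rewrite (dist_sym p z) in *. lia.
    + intros p Hp Hq. pose proof (F_leaves be n _ _ _ Hbe Ha Hp).
      apply in_app_or in Hq as [Hq|Hq].
      * pose proof (F_leaves be n _ _ _ Hbe Hb Hq). pose proof (dist_tri x p y).
        rewrite (dist_sym p y) in *. lia.
      * pose proof (F_leaves be n _ _ _ Hbe Hc Hq). pose proof (dist_tri x p z).
        rewrite (dist_sym p z) in *. lia.
Qed.

Lemma F_leaf_len be n x l : In l (F be n x) -> length l = (3 ^ n)%nat.
Proof.
  revert x l; induction n; intros x l.
  - simpl. intros [<-|[]]. auto.
  - intros Hl. apply F_inv in Hl as [y [z [a [b [c [_ [_ [_ [Ha [Hb [Hc ->]]]]]]]]]]].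
    rewrite !length_app. rewrite (IHn _ _ Ha), (IHn _ _ Hb), (IHn _ _ Hc). simpl. lia.
Qed.

Lemma F_cover al be E n x : (forall k, (1 <= k)%nat -> 0 <= be k) ->
  (forall m, 4 * Rr be m <= al (S m)) ->
  clean al be E n x -> exists l, In l (F be n x) /\ forall p, In p l -> E p.
Proof.
  intros Hbe Hal. revert x; induction n; intros x Hx.
  - exists (x :: nil). split; [left; auto|]. intros p [<-|[]]. exact Hx.
  - destruct Hx as [Hx Hn].
    pose proof (Rr_nonneg be n Hbe). pose proof (Hbe (S n) ltac:(lia)).
    destruct (far_triple (al (S n)) (be (S n)) (2 * Rr be n) (clean al be E n) x
      ltac:(lia) ltac:(specialize (Hal n); lia) Hx Hn)
      as [y [z [Ey [Ez [Dxy [Dxz [F1 [F2 F3]]]]]]]].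
    destruct (IHn x Hx) as [a [Ha Ea]].
    destruct (IHn y Ey) as [b [Hb Eb]].
    destruct (IHn z Ez) as [c [Hc Ec]].
    exists (a ++ b ++ c). split.
    + cbn [F]. apply in_flat_map. exists y. split; [apply box_in; lia|].
      apply in_flat_map. exists z. split; [apply box_in; lia|].
      unfold far. rewrite (proj2 (Z.ltb_lt _ _) F1), (proj2 (Z.ltb_lt _ _) F2),
        (proj2 (Z.ltb_lt _ _) F3). simpl.
      unfold prod3. apply in_flat_map. exists a. split; auto.
      apply in_flat_map. exists b. split; auto. apply in_map_iff. exists c. auto.
    + intros p Hp. apply in_app_or in Hp as [Hp|Hp]; auto.
      apply in_app_or in Hp as [Hp|Hp]; auto.
Qed.

Lemma not_sparse al be E : (forall k, (1 <= k)%nat -> 0 <= be k) ->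
  ~ bi_sparse al be E -> exists p, forall N, exists n, (N <= n)%nat /\
    exists y, dist p y <= be (S n) /\ clean al be E n y.
Proof.
  intros Hbe H. unfold bi_sparse in H. apply not_and_or in H as [H|H].
  - apply not_all_ex_not in H as [p H].
    apply imply_to_and in H as [Ep H].
    assert (Hc : forall n, clean al be E n p).
    { induction n; [exact Ep|].
      destruct (classic (clean al be E (S n) p)) as [C|C]; auto.
      exfalso. apply H. exists (S n). replace (S n - 1)%nat with n by lia. split; [lia|]. auto. }
    exists p. intros N. exists N. split; auto. exists p. rewrite dist_refl.
    split; auto. apply Hbe; lia.
  - apply not_all_ex_not in H as [p H]. exists p. intros N.
    apply NNPP. intros HN. apply H. exists N. intros i Hi Ha.
    apply HN. exists (i - 1)%nat. split; [lia|].
    destruct Ha as [X [[_ [Hsub _]] [x [Xx Dx]]]].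
    exists x. replace (S (i - 1)) with i by lia. split; auto.
Qed.

Definition cyl (l : list pt) : cylinder := map (fun p => (p, true)) l.

Lemma cyl_wf_l l : NoDup l -> cyl_wf (cyl l).
Proof. unfold cyl_wf, cyl. rewrite map_map. simpl. rewrite map_id. auto. Qed.

Lemma cyl_in l E : (forall p, In p l -> E p) -> in_cyl (cyl l) E.
Proof.
  unfold in_cyl, cyl. intros H p b Hp. apply in_map_iff in Hp as [q [Hq Hin]].
  inversion Hq; subst. split; auto.
Qed.

Lemma cyl_prob_l eps l : cyl_prob eps (cyl l) = (eps ^ length l)%R.
Proof. induction l; simpl; auto. rewrite IHl. auto. Qed.

Definition padl (m : nat) : list pt := map (fun j => (Z.of_nat j, 0)) (seq 0 m).

Lemma padl_nodup m : NoDup (padl m).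
Proof.
  unfold padl. apply NoDup_map_NoDup_ForallPairs; [|apply seq_NoDup].
  intros a b _ _ H. inversion H. lia.
Qed.
Lemma padl_len m : length (padl m) = m.
Proof. unfold padl. rewrite length_map, length_seq. auto. Qed.

Definition block (be : nat -> Z) (T k : nat) : list cylinder :=
  cyl (padl (3 ^ (T + k))) ::
  flat_map (fun p => flat_map (fun y => map cyl (F be (T + k) y)) (box p (be (S (T + k)))))
    (box (0, 0) (Z.of_nat k)).

Definition W be T N := concat (map (block be T) (seq 0 (S N))).
Definition Cseq be T n := nth n (W be T n) nil.

Lemma W_S be T N : W be T (S N) = W be T N ++ block be T (S N).
Proof. unfold W. rewrite (seq_S (S N)). rewrite map_app, concat_app. cbn [map concat]. rewrite app_nil_r. reflexivity. Qed.

Lemma W_len be T N : (N < length (W be T N))%nat.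
Proof.
  induction N.
  - unfold W. simpl. lia.
  - rewrite W_S, length_app. unfold block. cbn [length]. lia.
Qed.

Lemma W_prefix be T a b : (a <= b)%nat -> exists r, W be T b = W be T a ++ r.
Proof.
  induction 1.
  - exists nil. rewrite app_nil_r; auto.
  - destruct IHle as [r Hr]. exists (r ++ block be T (S m)). rewrite W_S, Hr, app_assoc. auto.
Qed.

Lemma nth_W be T a b j : (j < length (W be T a))%nat -> (a <= b)%nat ->
  nth j (W be T b) nil = nth j (W be T a) nil.
Proof. intros Hj Hab. destruct (W_prefix be T a b Hab) as [r ->]. apply app_nth1; auto. Qed.

Lemma Cseq_eq be T k j : (j < length (W be T k))%nat -> Cseq be T j = nth j (W be T k) nil.
Proof.
  intros Hj. unfold Cseq. destruct (Nat.le_ge_cases j k).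
  - rewrite (nth_W be T j k j); auto. apply W_len.
  - symmetry. rewrite (nth_W be T k j j); auto.
Qed.

Lemma block_in_W be T k c : In c (block be T k) -> In c (W be T k).
Proof.
  intros H. unfold W. apply in_concat. exists (block be T k). split; auto.
  apply in_map, in_seq. lia.
Qed.

Lemma block_cover be T k c : In c (block be T k) -> exists j, Cseq be T j = c.
Proof.
  intros H. apply block_in_W in H. apply (In_nth _ _ nil) in H as [j [Hj Hn]].
  exists j. rewrite (Cseq_eq be T k j Hj). auto.
Qed.

Lemma block_elems be T k c : In c (block be T k) ->
  exists l, c = cyl l /\ length l = (3 ^ (T + k))%nat /\
     ((forall m, (1 <= m)%nat -> 0 <= be m) -> NoDup l).
Proof.
  intros [<-|H].
  - exists (padl (3 ^ (T + k))). split; auto. split; [apply padl_len|]. intros; apply padl_nodup.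
  - apply in_flat_map in H as [p [_ H]]. apply in_flat_map in H as [y [_ H]].
    apply in_map_iff in H as [l [<- Hl]]. exists l. split; auto. split.
    + eapply F_leaf_len; eauto.
    + intros Hbe. eapply F_nodup; eauto.
Qed.

Lemma Cseq_in be T n : exists k, In (Cseq be T n) (block be T k).
Proof.
  unfold Cseq. pose proof (nth_In _ nil (W_len be T n)).
  unfold W at 2 in H. apply in_concat in H as [b [Hb Hc]].
  apply in_map_iff in Hb as [k [<- _]]. eauto.
Qed.

Lemma block_len be T k :
  (length (block be T k) <= (2 * k + 1) * (2 * k + 1) *
     (boxlen (be (S (T + k))) * boxlen (be (S (T + k))) * G be (T + k)) + 1)%nat.
Proof.
  unfold block. cbn [length].
  assert (length (flat_map (fun p => flat_map (fun y => map cyl (F be (T + k) y)) (box p (be (S (T + k)))))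
    (box (0%Z, 0%Z) (Z.of_nat k))) <= (2 * k + 1) * (2 * k + 1) *
     (boxlen (be (S (T + k))) * boxlen (be (S (T + k))) * G be (T + k)))%nat.
  { eapply Nat.le_trans. apply len_flat_map_le with (k := (boxlen (be (S (T + k))) * boxlen (be (S (T + k))) * G be (T + k))%nat).
    - intros p _. rewrite <- box_len with (c := p). apply len_flat_map_le. intros y _. rewrite length_map. apply F_len.
    - rewrite box_len. unfold boxlen at 1 2. 
      replace (Z.to_nat (2 * Z.of_nat k + 1)) with (2 * k + 1)%nat by lia. lia. }
  lia.
Qed.
Open Scope R_scope.

Lemma exp_nat m x : exp (INR m * x) = exp x ^ m.
Proof.
  induction m. { simpl. rewrite Rmult_0_l. apply exp_0. }
  rewrite S_INR, <- tech_pow_Rmult, Rmult_plus_distr_r, Rmult_1_l, exp_plus, IHm. ring.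
Qed.

Lemma sum_nth {A} (f : A -> R) (w : list A) d N : (forall c, 0 <= f c) -> (N < length w)%nat ->
  sum_f_R0 (fun n => f (nth n w d)) N <= fold_right Rplus 0 (map f w).
Proof.
  intros Hf. revert N; induction w as [|a w IH]; intros N HN; simpl in HN; [lia|].
  destruct N.
  - simpl. pose proof (Hf a).
    assert (0 <= fold_right Rplus 0 (map f w)).
    { clear -Hf. induction w; simpl; [lra|]. pose proof (Hf a). lra. }
    lra.
  - rewrite decomp_sum by lia. simpl. specialize (IH N ltac:(lia)). simpl in IH. lra.
Qed.

Lemma sum_geo q N : 0 <= q -> sum_f_R0 (fun k => q * (/2) ^ k) N <= 2 * q.
Proof.
  intros Hq. assert (sum_f_R0 (fun k => q * (/2) ^ k) N = 2 * q - 2 * q * (/2) ^ (S N)).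
  { induction N; simpl; [field|]. rewrite IHN. simpl. field. }
  rewrite H. assert (0 <= (/2) ^ (S N)) by (apply pow_le; lra). nra.
Qed.

Lemma sum_le_f (f g : nat -> R) N : (forall k, (k <= N)%nat -> f k <= g k) ->
  sum_f_R0 f N <= sum_f_R0 g N.
Proof.
  induction N; intros H; simpl; [apply H; lia|].
  pose proof (H (S N) ltac:(lia)). pose proof (IHN (fun k Hk => H k ltac:(lia))). lra.
Qed.

Lemma sum_eq_f (f g : nat -> R) N : (forall k, (k <= N)%nat -> f k = g k) ->
  sum_f_R0 f N = sum_f_R0 g N.
Proof.
  induction N; intros H; simpl; [apply H; lia|].
  rewrite (H (S N) ltac:(lia)), (IHN (fun k Hk => H k ltac:(lia))). auto.
Qed.

Lemma pow_le_exp3 th n : 0 <= th <= 1 -> th ^ (3 ^ n) <= th ^ n.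
Proof.
  intros Hth. assert (H3 : (1 + n <= 3 ^ n)%nat) by (induction n; simpl; lia).
  replace (3 ^ n)%nat with (n + (3 ^ n - n))%nat by lia. rewrite pow_add.
  assert (0 <= th ^ (3 ^ n - n) <= 1).
  { generalize (3 ^ n - n)%nat. induction n0; simpl; nra. }
  assert (0 <= th ^ n) by (apply pow_le; lra). nra.
Qed.

Fixpoint A (be : nat -> Z) (n : nat) : R :=
  match n with O => 0 | S m => A be m + 4 * ln (7 * IZR (be (S m))) / 3 ^ (S m) end.

Lemma INR_boxlen r : (0 <= r)%Z -> INR (boxlen r) = IZR (2 * r + 1).
Proof. intros. unfold boxlen. rewrite INR_IZR_INZ. f_equal. lia. Qed.

Lemma G_real be n : (forall k, (1 <= k)%nat -> (1 <= be k)%Z) ->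
  (forall m, (8 * Rr be m + 1 <= 3 * be (S m))%Z) ->
  INR (G be n) <= exp (3 ^ n * A be n).
Proof.
  intros Hb HR. induction n.
  - simpl. rewrite Rmult_0_r, exp_0. lra.
  - cbn [G A]. rewrite !mult_INR.
    assert (HRn : (0 <= Rr be n)%Z) by (apply Rr_nonneg; intros; specialize (Hb k H); lia).
    pose proof (Hb (S n) ltac:(lia)). pose proof (HR n).
    rewrite !INR_boxlen by lia.
    set (b := IZR (be (S n))).
    assert (Hb1 : 1 <= b) by (apply IZR_le; lia).
    assert (E1 : 0 <= IZR (2 * (2 * Rr be n + be (S n)) + 1) <= 7 * b).
    { unfold b. split; [apply IZR_le; lia|]. rewrite <- mult_IZR. apply IZR_le. lia. }
    assert (E2 : 0 <= IZR (2 * (2 * (2 * Rr be n) + 2 * be (S n)) + 1) <= 7 * b).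
    { unfold b. split; [apply IZR_le; lia|]. rewrite <- mult_IZR. apply IZR_le. lia. }
    set (g := INR (G be n)) in *.
    assert (Hg : 0 <= g) by apply pos_INR.
    set (X := exp (3 ^ n * A be n)) in *.
    assert (HX : 0 < X) by apply exp_pos.
    assert (Hstep : IZR (2 * (2 * Rr be n + be (S n)) + 1) * IZR (2 * (2 * Rr be n + be (S n)) + 1) *
       (IZR (2 * (2 * (2 * Rr be n) + 2 * be (S n)) + 1) * IZR (2 * (2 * (2 * Rr be n) + 2 * be (S n)) + 1)) *
       (g * g * g) <= (7 * b) ^ 4 * X ^ 3).
    { destruct E1 as [E1a E1b], E2 as [E2a E2b].
      set (u := IZR (2 * (2 * Rr be n + be (S n)) + 1)) in *.
      set (v := IZR (2 * (2 * (2 * Rr be n) + 2 * be (S n)) + 1)) in *.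
      assert (u * u <= (7 * b) * (7 * b)) by (apply Rmult_le_compat; lra).
      assert (v * v <= (7 * b) * (7 * b)) by (apply Rmult_le_compat; lra).
      assert (u * u * (v * v) <= (7 * b) ^ 4).
      { replace ((7 * b) ^ 4) with ((7 * b) * (7 * b) * ((7 * b) * (7 * b))) by ring.
        apply Rmult_le_compat; nra. }
      assert (g * g <= X * X) by (apply Rmult_le_compat; lra).
      assert (g * g * g <= X ^ 3).
      { replace (X ^ 3) with (X * X * X) by ring. apply Rmult_le_compat; nra. }
      apply Rmult_le_compat; nra. }
    eapply Rle_trans; [exact Hstep|].
    assert (H7 : 0 < 7 * b) by lra.
    replace ((7 * b) ^ 4 * X ^ 3) with (exp (4 * ln (7 * b) + 3 * (3 ^ n * A be n))).
    + right. f_equal. simpl. assert (0 < 3 ^ n) by (apply pow_lt; lra). field. lra.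
    + rewrite exp_plus. unfold X.
      replace ((7 * b) ^ 4) with (exp (ln (7 * b)) ^ 4) by (rewrite exp_ln; lra).
      rewrite <- !exp_nat. f_equal; f_equal; simpl; ring.
Qed.

Lemma ln_nonneg x : 1 <= x -> 0 <= ln x.
Proof.
  intros H. destruct (Req_dec x 1) as [->|H1]; [rewrite ln_1; lra|].
  rewrite <- ln_1. left. apply ln_increasing; lra.
Qed.

Definition sB (be : nat -> Z) (n : nat) : R :=
  match n with O => 0 | S m => sum_f_R0 (fun i => ln (IZR (be (S i))) / 3 ^ (S i)) m end.

Lemma sB_S be n : sB be (S n) = sB be n + ln (IZR (be (S n))) / 3 ^ (S n).
Proof. destruct n; simpl; [ring|]. auto. Qed.

Lemma A_eq be n : (forall k, (1 <= k)%nat -> (1 <= be k)%Z) ->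
  A be n = 2 * ln 7 * (1 - (/3) ^ n) + 4 * sB be n.
Proof.
  intros Hb. induction n; [simpl; ring|].
  cbn [A]. rewrite IHn, sB_S.
  assert (H1 : 1 <= IZR (be (S n))) by (apply IZR_le; apply Hb; lia).
  rewrite ln_mult by lra. rewrite !pow_inv.
  assert (0 < 3 ^ n) by (apply pow_lt; lra). simpl. field. lra.
Qed.

Lemma A_bound be l n : (forall k, (1 <= k)%nat -> (1 <= be k)%Z) ->
  Un_cv (fun N => sum_f_R0 (fun i => ln (IZR (be (S i))) / 3 ^ (S i)) N) l ->
  A be n <= 2 * ln 7 + 4 * Rabs l.
Proof.
  intros Hb Hl. rewrite A_eq by auto.
  assert (Hterm : forall i, 0 <= ln (IZR (be (S i))) / 3 ^ (S i)).
  { intros i. unfold Rdiv. apply Rmult_le_pos; [apply ln_nonneg, IZR_le, Hb; lia|left; apply Rinv_0_lt_compat, pow_lt; lra]. }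
  assert (Hs : sB be n <= Rabs l).
  { destruct n; simpl sB; [apply Rabs_pos|].
    eapply Rle_trans; [|apply RRle_abs]. apply growing_ineq; auto.
    intros m. pose proof (Hterm (S m)) as Ht. unfold Un_growing. simpl in Ht |- *. lra. }
  assert (H7 : 0 <= ln 7) by (apply ln_nonneg; lra).
  assert (0 <= (/3) ^ n) by (apply pow_le; lra). nra.
Qed.

Definition lsum (l : list R) := fold_right Rplus 0 l.

Lemma lsum_app {X} (f : X -> R) a b : lsum (map f (a ++ b)) = lsum (map f a) + lsum (map f b).
Proof. induction a; simpl; [ring|]. unfold lsum in *. simpl. rewrite IHa. ring. Qed.

Lemma lsum_const {X} (f : X -> R) w v : (forall c, In c w -> f c = v) ->
  lsum (map f w) = INR (length w) * v.
Proof.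
  induction w; intros H; [simpl; ring|]. unfold lsum in *. cbn [map fold_right length].
  rewrite (H a (or_introl eq_refl)), (IHw (fun c Hc => H c (or_intror Hc))), S_INR. ring.
Qed.

Lemma cyl_prob_nonneg eps c : 0 <= eps <= 1 -> 0 <= cyl_prob eps c.
Proof.
  intros He. induction c as [|[p b] c IH]; simpl; [lra|].
  destruct b; apply Rmult_le_pos; lra.
Qed.

Lemma sq_le_9 k : ((2 * k + 1) * (2 * k + 1) <= 9 ^ k)%nat.
Proof. induction k; simpl; [lia|]. nia. Qed.

Lemma boxlen_pos r : (0 <= r)%Z -> (1 <= boxlen r)%nat.
Proof. unfold boxlen; lia. Qed.

Lemma boxlen_mono r s : (r <= s)%Z -> (boxlen r <= boxlen s)%nat.
Proof. unfold boxlen; lia. Qed.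

Lemma G_step be n : (0 <= Rr be n)%Z -> (0 <= be (S n))%Z ->
  (boxlen (be (S n)) * boxlen (be (S n)) * G be n <= G be (S n))%nat.
Proof.
  intros H1 H2. cbn [G].
  pose proof (boxlen_mono (be (S n)) (2 * Rr be n + be (S n)) ltac:(lia)).
  pose proof (boxlen_pos (2 * (2 * Rr be n) + 2 * be (S n)) ltac:(lia)).
  set (b := boxlen (be (S n))) in *. set (b1 := boxlen (2 * Rr be n + be (S n))) in *.
  set (b2 := boxlen (2 * (2 * Rr be n) + 2 * be (S n))) in *. set (g := G be n).
  assert (g <= g * g * g)%nat by nia.
  assert (b * b <= b1 * b1)%nat by nia.
  assert (1 <= b2 * b2)%nat by nia.
  apply Nat.le_trans with (b1 * b1 * (g * g * g))%nat.
  - apply Nat.mul_le_mono; auto.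
  - replace (b1 * b1 * (b2 * b2) * (g * g * g))%nat with ((b2 * b2) * (b1 * b1 * (g * g * g)))%nat by ring.
    set (w := (b1 * b1 * (g * g * g))%nat). nia.
Qed.

Lemma block_bound be T k eps K :
  (forall k, (1 <= k)%nat -> (1 <= be k)%Z) ->
  (forall m, (8 * Rr be m + 1 <= 3 * be (S m))%Z) ->
  (forall n, A be n <= K) -> 0 <= K -> 0 < eps -> exp (3 * K) * eps <= / 18 ->
  lsum (map (cyl_prob eps) (block be T k)) <= 2 * (exp (3 * K) * eps) ^ T * (/2) ^ k.
Proof.
  intros Hb HR HA HK He Hth.
  set (n := (T + k)%nat).
  set (Mk := exp (3 * K)). set (th := Mk * eps) in *.
  assert (HM : 1 <= Mk).
  { unfold Mk. rewrite <- exp_0. destruct HK as [HK|HK]; [left; apply exp_increasing; lra|rewrite <- HK; right; f_equal; ring]. }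
  rewrite (lsum_const _ _ (eps ^ (3 ^ n))).
  2:{ intros c Hc. apply block_elems in Hc as [l [-> [Hl _]]]. rewrite cyl_prob_l, Hl. auto. }
  assert (HRn : (0 <= Rr be n)%Z) by (apply Rr_nonneg; intros; specialize (Hb k0 H); lia).
  assert (Hlen : (length (block be T k) <= 9 ^ k * G be (S n) + 1)%nat).
  { eapply Nat.le_trans; [apply block_len|]. fold n.
    pose proof (sq_le_9 k). pose proof (G_step be n HRn ltac:(specialize (Hb (S n)); lia)).
    apply Nat.add_le_mono_r. apply Nat.mul_le_mono; auto. }
  apply le_INR in Hlen. rewrite plus_INR, mult_INR, pow_INR in Hlen.
  replace (INR 9) with 9 in Hlen by (simpl; ring). rewrite INR_1 in Hlen.
  assert (HG : INR (G be (S n)) <= Mk ^ (3 ^ n)).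
  { eapply Rle_trans; [apply G_real; auto|].
    unfold Mk. rewrite <- exp_nat. 
    assert (3 ^ S n * A be (S n) <= INR (3 ^ n) * (3 * K)).
    { rewrite pow_INR. replace (INR 3) with 3 by (simpl; ring). rewrite <- tech_pow_Rmult.
      specialize (HA (S n)). assert (0 < 3 ^ n) by (apply pow_lt; lra).
      replace (3 ^ n * (3 * K)) with (3 * 3 ^ n * K) by ring. apply Rmult_le_compat_l; lra. }
    destruct H as [H|H]; [left; apply exp_increasing; auto|rewrite H; lra]. }
  assert (He1 : eps <= th) by (unfold th; nra).
  assert (Hth0 : 0 <= th) by (unfold th; nra).
  assert (Hpe : 0 <= eps ^ (3 ^ n)) by (apply pow_le; lra).
  assert (Hp : eps ^ (3 ^ n) <= th ^ (3 ^ n)) by (apply pow_incr; lra).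
  assert (Hmul : Mk ^ (3 ^ n) * eps ^ (3 ^ n) = th ^ (3 ^ n)) by (unfold th; rewrite Rpow_mult_distr; auto).
  assert (H9 : 1 <= 9 ^ k) by (apply pow_R1_Rle; lra).
  assert (Hstep1 : INR (length (block be T k)) * eps ^ (3 ^ n) <= 2 * 9 ^ k * th ^ (3 ^ n)).
  { eapply Rle_trans. apply Rmult_le_compat_r; [auto|exact Hlen].
    assert (INR (G be (S n)) * eps ^ (3 ^ n) <= th ^ (3 ^ n)) by (rewrite <- Hmul; apply Rmult_le_compat_r; auto).
    assert (9 ^ k * (INR (G be (S n)) * eps ^ (3 ^ n)) <= 9 ^ k * th ^ (3 ^ n)) by (apply Rmult_le_compat_l; lra).
    assert (0 <= th ^ (3 ^ n)) by (apply pow_le; lra).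
    assert (th ^ (3 ^ n) <= 9 ^ k * th ^ (3 ^ n)) by nra.
    replace ((9 ^ k * INR (G be (S n)) + 1) * eps ^ (3 ^ n)) with (9 ^ k * (INR (G be (S n)) * eps ^ (3 ^ n)) + eps ^ (3 ^ n)) by ring.
    lra. }
  eapply Rle_trans; [exact Hstep1|].
  assert (Hth1 : th <= 1) by (unfold th, Mk; lra).
  assert (th ^ (3 ^ n) <= th ^ n) by (apply pow_le_exp3; lra).
  replace (th ^ n) with (th ^ T * th ^ k) in H by (unfold n; rewrite pow_add; auto).
  assert (Hk : 9 ^ k * th ^ k <= (/2) ^ k).
  { rewrite <- Rpow_mult_distr. apply pow_incr. unfold th, Mk in *. lra. }
  assert (0 <= th ^ T) by (apply pow_le; lra).
  assert (0 <= th ^ k) by (apply pow_le; lra).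
  assert (9 ^ k * th ^ (3 ^ n) <= 9 ^ k * (th ^ T * th ^ k)) by (apply Rmult_le_compat_l; lra).
  nra.
Qed.

Lemma lsum_W be T N f : lsum (map f (W be T N)) = sum_f_R0 (fun k => lsum (map f (block be T k))) N.
Proof.
  induction N.
  - unfold W. simpl. rewrite app_nil_r. auto.
  - rewrite W_S, lsum_app, IHN. simpl. auto.
Qed.

Theorem mainTheorem14 (alpha beta : nat -> Z) :
  (forall n, (1 <= n)%nat ->
     (12 * sum_before beta n < alpha n)%Z /\ (alpha n <= beta n)%Z) ->
  (exists l, Un_cv (fun N => sum_f_R0
                      (fun i => ln (IZR (beta (S i))) / 3 ^ (S i)) N) l) ->
  exists eps0, 0 < eps0 /\
    forall eps, 0 < eps -> eps < eps0 ->
      B_null eps (fun E => ~ bi_sparse alpha beta E).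
Proof.
  intros Hab [l Hl].
  assert (Hsum : forall n, (0 <= sum_before beta (S n))%Z).
  { induction n; [simpl; lia|].
    change (sum_before beta (S (S n))) with (sum_before beta (S n) + beta (S n))%Z.
    destruct (Hab (S n) ltac:(lia)). lia. }
  assert (Hb1 : forall k, (1 <= k)%nat -> (1 <= beta k)%Z).
  { intros k Hk. destruct k; [lia|]. destruct (Hab (S k) Hk). pose proof (Hsum k). lia. }
  assert (Hb0 : forall k, (1 <= k)%nat -> (0 <= beta k)%Z) by (intros k Hk; specialize (Hb1 k Hk); lia).
  assert (HRs : forall n, (Rr beta n <= 3 * sum_before beta (S n))%Z).
  { induction n; [simpl; lia|].
    change (sum_before beta (S (S n))) with (sum_before beta (S n) + beta (S n))%Z.
    cbn [Rr]. destruct (Hab (S n) ltac:(lia)). pose proof (Hsum n). lia. }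
  assert (Hal : forall m, (4 * Rr beta m <= alpha (S m))%Z).
  { intros m. destruct (Hab (S m) ltac:(lia)). pose proof (HRs m). pose proof (Hsum m). lia. }
  assert (HR : forall m, (8 * Rr beta m + 1 <= 3 * beta (S m))%Z).
  { intros m. destruct (Hab (S m) ltac:(lia)). pose proof (HRs m). pose proof (Hsum m). lia. }
  set (K := 2 * ln 7 + 4 * Rabs l).
  assert (HK : 0 <= K).
  { unfold K. pose proof (Rabs_pos l). assert (0 <= ln 7) by (apply ln_nonneg; lra). lra. }
  assert (HA : forall n, A beta n <= K) by (intros; apply A_bound; auto).
  set (Mk := exp (3 * K)).
  assert (HM : 0 < Mk) by apply exp_pos.
  exists (/ (18 * Mk)). split; [apply Rinv_0_lt_compat; lra|].
  intros eps He He0 delta Hd.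
  assert (Hth : Mk * eps <= / 18).
  { apply Rmult_lt_compat_l with (r := Mk) in He0; auto.
    replace (Mk * / (18 * Mk)) with (/ 18) in He0 by (field; lra). lra. }
  assert (Hth0 : 0 < Mk * eps) by nra.
  destruct (pow_lt_1_zero (Mk * eps) ltac:(rewrite Rabs_pos_eq; lra) (delta / 4) ltac:(lra)) as [T HT].
  specialize (HT T (le_n _)). rewrite Rabs_pos_eq in HT by (apply pow_le; lra).
  assert (Heps1 : eps <= 1).
  { assert (1 <= Mk) by (unfold Mk; rewrite <- exp_0; destruct HK as [HK|HK];
      [left; apply exp_increasing; lra|rewrite <- HK; right; f_equal; ring]). nra. }
  exists (Cseq beta T). split; [|split].
  - intros n. destruct (Cseq_in beta T n) as [k Hk].
    apply block_elems in Hk as [c [-> [_ Hnd]]]. apply cyl_wf_l. auto.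
  - intros E HE. apply not_sparse in HE as [p Hp]; auto.
    destruct (Hp (T + Z.to_nat (dist (0%Z, 0%Z) p))%nat) as [n [Hn [y [Hy Cy]]]].
    set (k := (n - T)%nat).
    assert (Hnk : n = (T + k)%nat) by (unfold k; lia).
    destruct (F_cover alpha beta E n y Hb0 Hal Cy) as [lv [Hlv HE]].
    assert (Hin : In (cyl lv) (block beta T k)).
    { unfold block. right. apply in_flat_map. exists p. split.
      - apply box_in; [lia|]. pose proof (dist_nonneg (0%Z,0%Z) p). lia.
      - apply in_flat_map. exists y. rewrite <- Hnk. split.
        + apply box_in; auto. apply Hb0; lia.
        + apply in_map; auto. }
    destruct (block_cover beta T k _ Hin) as [j Hj]. exists j. rewrite Hj. apply cyl_in; auto.
  - intros N.
    rewrite (sum_eq_f _ (fun n => cyl_prob eps (nth n (W beta T N) nil)) N).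
    2:{ intros n Hn. rewrite (Cseq_eq beta T N n); auto. pose proof (W_len beta T N). lia. }
    eapply Rle_trans. apply sum_nth; [intros; apply cyl_prob_nonneg; lra|apply W_len].
    fold (lsum (map (cyl_prob eps) (W beta T N))). rewrite lsum_W.
    eapply Rle_trans. apply sum_le_f. intros k _. apply (block_bound beta T k eps K); auto.
    eapply Rle_trans. apply sum_geo. assert (0 <= (Mk * eps) ^ T) by (apply pow_le; lra).
    unfold Mk in *. lra.
    unfold Mk in *. lra.
Qed.
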